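(* Let $\mathcal{T}=\mathcal{X}=\mathcal{Y}=\{0,1\}$ and $P\in\Delta_{\mathcal{T},\mathcal{X},\mathcal{Y}}$ with $a=P(T=0)\in(0,1)$, and let $b,c,d,e$, $Q_0$, $g_1,g_2$ and the bounds $g_{i,\min},g_{i,\max}$ be as in the context. If $\tilde Q\in\arg\max_{Q\in\Delta_P}H_Q(T\mid X,Y)$ lies on the relative boundary of $\Delta_P$, then $\tilde Q$ has parameters $(g_1,g_2)=(g_{1,\min},g_{2,\min})$ or $(g_1,g_2)=(g_{1,\max},g_{2,\max})$.
   Context: $\Delta_P=\{Q: Q(X=x,T=t)=P(X=x,T=t),\ Q(Y=y,T=t)=P(Y=y,T=t)\ \forall x,y,t\}$. Parameters: $a=P(T=0)$, $b=P(X=0\mid T=0)$, $c=P(X=0\mid T=1)$, $d=P(Y=0\mid T=0)$, $e=P(Y=0\mid T=1)$. Every $Q\in\Delta_P$ can be written uniquely as $Q(0,x,y)=a\,(P(x\mid 0)P(y\mid 0)+\sigma(x,y)g_1)$ and $Q(1,x,y)=(1-a)(P(x\mid 1)P(y\mid 1)+\sigma(x,y)g_2)$, where $\sigma(x,y)=+1$ if $x=y$ and $-1$ if $x\neq y$; i.e. $Q=Q_0+a g_1\gamma_{0}+(1-a)g_2\gamma_1$ with $Q_0(t,x,y)=P(t)P(x\mid t)P(y\mid t)$ and $\gamma_t=\delta_{t,0,0}+\delta_{t,1,1}-\delta_{t,0,1}-\delta_{t,1,0}$. The admissible parameters form the rectangle $g_{1,\min}\le g_1\le g_{1,\max}$,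 $g_{2,\min}\le g_2\le g_{2,\max}$ with $g_{1,\min}=-\min\{bd,(1-b)(1-d)\}$, $g_{1,\max}=\min\{b(1-d),(1-b)d\}$, $g_{2,\min}=-\min\{ce,(1-c)(1-e)\}$, $g_{2,\max}=\min\{c(1-e),(1-c)e\}$. *)

(* Defs.v *)
From Stdlib Require Import Reals List.
Import ListNotations.
Open Scope R_scope.

(* A (joint) distribution on T x X x Y = {0,1}^3, value Q t x y = Q(T=t,X=x,Y=y).
   The symbol 0 of {0,1} is encoded by [false], 1 by [true]. *)
Definition Dist := bool -> bool -> bool -> R.

Definition sum2 (f : bool -> R) : R := f false + f true.

Definition is_dist (Q : Dist) : Prop :=
  (forall t x y, 0 <= Q t x y) /\
  sum2 (fun t => sum2 (fun x => sum2 (fun y => Q t x y))) = 1.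

Definition margT (Q : Dist) (t : bool) : R := sum2 (fun x => sum2 (fun y => Q t x y)).
Definition margXT (Q : Dist) (x t : bool) : R := sum2 (fun y => Q t x y).
Definition margYT (Q : Dist) (y t : bool) : R := sum2 (fun x => Q t x y).
Definition margXY (Q : Dist) (x y : bool) : R := sum2 (fun t => Q t x y).

Definition DeltaP (P Q : Dist) : Prop :=
  is_dist Q /\
  (forall x t, margXT Q x t = margXT P x t) /\
  (forall y t, margYT Q y t = margYT P y t).

(* Conditional entropy H_Q(T | X,Y) (natural log; convention 0 log 0 = 0). *)
Definition cond_ent_term (q qxy : R) : R :=
  if Rlt_dec 0 q then q * ln (qxy / q) else 0.
Definition condEntropy_T_XY (Q : Dist) : R :=
  sum2 (fun t => sum2 (fun x => sum2 (fun y => cond_ent_term (Q t x y) (margXY Q x y)))).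

Definition par_a (P : Dist) : R := margT P false.
Definition par_b (P : Dist) : R := margXT P false false / margT P false.
Definition par_c (P : Dist) : R := margXT P false true / margT P true.
Definition par_d (P : Dist) : R := margYT P false false / margT P false.
Definition par_e (P : Dist) : R := margYT P false true / margT P true.

(* Parameters (g1,g2) of Q in Delta_P, read off from
   Q(0,0,0) = a (b d + g1),  Q(1,0,0) = (1-a) (c e + g2). *)
Definition par_g1 (P Q : Dist) : R := Q false false false / par_a P - par_b P * par_d P.
Definition par_g2 (P Q : Dist) : R := Q true false false / (1 - par_a P) - par_c P * par_e P.

Definition g1_min (P : Dist) : R :=
  - Rmin (par_b P * par_d P) ((1 - par_b P) * (1 - par_d P)).
Definition g1_max (P : Dist) : R :=
  Rmin (par_b P * (1 - par_d P)) ((1 - par_b P) * par_d P).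
Definition g2_min (P : Dist) : R :=
  - Rmin (par_c P * par_e P) ((1 - par_c P) * (1 - par_e P)).
Definition g2_max (P : Dist) : R :=
  Rmin (par_c P * (1 - par_e P)) ((1 - par_c P) * par_e P).

Definition near (eps : R) (Q R' : Dist) : Prop :=
  forall t x y, Rabs (Q t x y - R' t x y) < eps.

Definition aff_hull (S : Dist -> Prop) (Z : Dist) : Prop :=
  exists l : list (R * Dist),
    Forall (fun p => S (snd p)) l /\
    fold_right (fun p acc => fst p + acc) 0 l = 1 /\
    forall t x y, Z t x y = fold_right (fun p acc => fst p * snd p t x y + acc) 0 l.

Definition closure (S : Dist -> Prop) (Z : Dist) : Prop :=
  forall eps, 0 < eps -> exists W, S W /\ near eps Z W.

Definition rel_interior (S : Dist -> Prop) (Z : Dist) : Prop :=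
  S Z /\ exists eps, 0 < eps /\ forall W, aff_hull S W -> near eps W Z -> S W.

Definition rel_boundary (S : Dist -> Prop) (Z : Dist) : Prop :=
  closure S Z /\ ~ rel_interior S Z.

Definition is_argmax_condEnt (P Qt : Dist) : Prop :=
  DeltaP P Qt /\ forall Q, DeltaP P Q -> condEntropy_T_XY Q <= condEntropy_T_XY Qt.

(* Main.v *)
Require Import Defs.
From Stdlib Require Import Reals Lra List Bool.
Open Scope R_scope.

Lemma ln_le_m1 y : 0 < y -> ln y <= y - 1.
Proof.
  intros Hy. destruct (Rle_or_lt (ln y) (y-1)) as [H|H]; auto.
  exfalso. apply exp_increasing in H. rewrite exp_ln in H by auto.
  pose proof (exp_ineq1_le (y-1)). lra.
Qed.

Lemma ln_mono x y : 0 < x -> x <= y -> ln x <= ln y.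
Proof.
  intros Hx H. destruct (Rle_lt_or_eq_dec _ _ H) as [H1|H1].
  - left. apply ln_increasing; auto.
  - subst; lra.
Qed.

Lemma ln_div' x y : 0 < x -> 0 < y -> ln (x / y) = ln x - ln y.
Proof.
  intros. unfold Rdiv. rewrite ln_mult, ln_Rinv; try lra.
  apply Rinv_0_lt_compat; auto.
Qed.

Lemma ln_diff_le a b : 0 < a -> 0 < b -> ln a - ln b <= (a - b) / b.
Proof.
  intros Ha Hb. rewrite <- ln_div' by auto.
  assert (0 < a / b) by (apply Rdiv_lt_0_compat; auto).
  pose proof (ln_le_m1 (a/b) H).
  replace ((a-b)/b) with (a/b - 1) by (field; lra). auto.
Qed.

Definition G (q r : R) : R := cond_ent_term q (q + r) + cond_ent_term r (q + r).

Lemma cet_pos q m : 0 < q -> 0 < m -> cond_ent_term q m = q * (ln m - ln q).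
Proof.
  intros. unfold cond_ent_term. destruct (Rlt_dec 0 q); [|lra].
  rewrite ln_div'; auto.
Qed.

Lemma cet_0 m : cond_ent_term 0 m = 0.
Proof. unfold cond_ent_term. destruct (Rlt_dec 0 0); lra. Qed.

Lemma G_zero_inc r d : 0 < r -> 0 < d -> G (0 + d) r >= G 0 r + d * (ln r - ln d).
Proof.
  intros Hr Hd. unfold G. rewrite cet_0.
  replace (0 + d) with d by ring. replace (0 + r) with r by ring.
  rewrite !cet_pos by lra.
  assert (ln r <= ln (d + r)) by (apply ln_mono; lra).
  assert (0 <= r * (ln (d+r) - ln r)) by (apply Rmult_le_pos; lra).
  assert (d * (ln r - ln d) <= d * (ln (d+r) - ln d)) by (apply Rmult_le_compat_l; lra).
  replace (r * (ln r - ln r)) with 0 by ring. lra.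
Qed.

Lemma G_inc q r d : 0 <= q -> 0 <= r -> 0 < d -> G (q + d) r >= G q r - d.
Proof.
  intros Hq Hr Hd. unfold G.
  assert (Hr' : cond_ent_term r (q + d + r) >= cond_ent_term r (q + r)).
  { destruct (Rle_lt_or_eq_dec _ _ Hr) as [Hr1|Hr1].
    - rewrite !cet_pos by lra.
      assert (ln (q+r) <= ln (q+d+r)) by (apply ln_mono; lra).
      assert (r * (ln (q + r) - ln r) <= r * (ln (q + d + r) - ln r)) by (apply Rmult_le_compat_l; lra).
      lra.
    - subst r. rewrite !cet_0. lra. }
  assert (Hq' : cond_ent_term (q + d) (q + d + r) >= cond_ent_term q (q + r) - d).
  { destruct (Rle_lt_or_eq_dec _ _ Hq) as [Hq1|Hq1].
    - rewrite !cet_pos by lra.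
      assert (h1 : ln (q+d) <= ln (q+d+r)) by (apply ln_mono; lra).
      assert (h2 : ln (q+r) <= ln (q+d+r)) by (apply ln_mono; lra).
      assert (h3 : ln (q+d) - ln q <= (q + d - q) / q) by (apply ln_diff_le; lra).
      assert (h4 : 0 <= d * (ln (q+d+r) - ln (q+d))) by (apply Rmult_le_pos; lra).
      assert (h5 : 0 <= q * (ln (q+d+r) - ln (q+r))) by (apply Rmult_le_pos; lra).
      assert (h6 : q * (ln (q+d) - ln q) <= q * ((q + d - q) / q)) by (apply Rmult_le_compat_l; lra).
      replace (q * ((q + d - q) / q)) with d in h6 by (field; lra).
      lra.
    - subst q. rewrite cet_0. replace (0 + d) with d by ring. replace (0+d+r) with (d+r) by ring.
      rewrite cet_pos by lra.
      assert (ln d <= ln (d+r)) by (apply ln_mono; lra).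
      assert (0 <= d * (ln (d+r) - ln d)) by (apply Rmult_le_pos; lra). lra. }
  replace (q + d + r) with (q + r + d) in * by ring. lra.
Qed.

Lemma G_dec q r d : 0 <= r -> 0 < d -> d < q ->
  G (q - d) r >= G q r - d * (1 + (ln (q + r) - ln q)).
Proof.
  intros Hr Hd Hdq. unfold G.
  assert (Hq' : cond_ent_term (q - d) (q - d + r) >= cond_ent_term q (q + r) - d * (ln (q + r) - ln q)).
  { rewrite !cet_pos by lra.
    assert (h1 : (q + r) / q <= (q - d + r) / (q - d)).
    { apply Rmult_le_reg_r with (q * (q - d)). nra.
      replace ((q + r) / q * (q * (q - d))) with ((q+r)*(q-d)) by (field; lra).
      replace ((q - d + r) / (q - d) * (q * (q - d))) with ((q-d+r)*q) by (field; lra). nra. }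
    apply ln_mono in h1; [|apply Rdiv_lt_0_compat; lra].
    rewrite !ln_div' in h1 by lra.
    assert ((q-d) * (ln (q + r) - ln q) <= (q-d) * (ln (q - d + r) - ln (q - d))) by (apply Rmult_le_compat_l; lra).
    lra. }
  assert (Hr' : cond_ent_term r (q - d + r) >= cond_ent_term r (q + r) - d).
  { destruct (Rle_lt_or_eq_dec _ _ Hr) as [Hr1|Hr1].
    - rewrite !cet_pos by lra.
      assert (h3 : ln (q+r) - ln (q-d+r) <= (q + r - (q - d + r)) / (q - d + r)) by (apply ln_diff_le; lra).
      assert (h6 : r * (ln (q+r) - ln (q-d+r)) <= r * ((q + r - (q - d + r)) / (q - d + r))) by (apply Rmult_le_compat_l; lra).
      assert (h7 : r * ((q + r - (q - d + r)) / (q - d + r)) <= d).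
      { apply Rmult_le_reg_r with (q - d + r). lra.
        replace (r * ((q + r - (q - d + r)) / (q - d + r)) * (q - d + r)) with (r * d) by (field; lra). nra. }
      lra.
    - subst r. rewrite !cet_0. lra. }
  lra.
Qed.

Lemma key q1 q2 q3 q4 r1 r2 r3 r4 :
  q1 = 0 -> 0 < r1 -> 0 <= q2 -> 0 <= r2 -> 0 < q3 -> 0 <= r3 -> 0 < q4 -> 0 <= r4 ->
  exists d, 0 < d /\ d < q3 /\ d < q4 /\
    G q1 r1 + G q2 r2 + G q3 r3 + G q4 r4 <
    G (q1 + d) r1 + G (q2 + d) r2 + G (q3 - d) r3 + G (q4 - d) r4.
Proof.
  intros E1 Hr1 Hq2 Hr2 Hq3 Hr3 Hq4 Hr4.
  set (C := 1 + (1 + (ln (q3 + r3) - ln q3)) + (1 + (ln (q4 + r4) - ln q4))).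
  set (d := Rmin (Rmin (q3/2) (q4/2)) (r1 * exp (-(C+1)))).
  assert (He : 0 < exp (-(C+1))) by apply exp_pos.
  assert (Hd : 0 < d).
  { unfold d. apply Rmin_glb_lt. apply Rmin_glb_lt; lra. apply Rmult_lt_0_compat; lra. }
  assert (Hd1 : d <= Rmin (q3/2) (q4/2)) by apply Rmin_l.
  assert (Hd2 : d <= r1 * exp (-(C+1))) by apply Rmin_r.
  assert (Hd3 : Rmin (q3/2) (q4/2) <= q3/2) by apply Rmin_l.
  assert (Hd4 : Rmin (q3/2) (q4/2) <= q4/2) by apply Rmin_r.
  exists d. split; [auto|]. split; [lra|]. split; [lra|].
  subst q1.
  pose proof (G_zero_inc r1 d Hr1 Hd) as A1.
  pose proof (G_inc q2 r2 d Hq2 Hr2 Hd) as A2.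
  pose proof (G_dec q3 r3 d Hr3 Hd ltac:(lra)) as A3.
  pose proof (G_dec q4 r4 d Hr4 Hd ltac:(lra)) as A4.
  assert (HL : C + 1 <= ln r1 - ln d).
  { rewrite <- ln_div' by lra.
    rewrite <- (ln_exp (C+1)). apply ln_mono. apply exp_pos.
    apply Rmult_le_reg_r with (d * exp (-(C+1))). apply Rmult_lt_0_compat; lra.
    replace (r1 / d * (d * exp (- (C + 1)))) with (r1 * exp (-(C+1))) by (field; lra).
    replace (exp (C + 1) * (d * exp (- (C + 1)))) with (d * (exp (C+1) * exp (-(C+1)))) by ring.
    rewrite <- exp_plus. replace (C + 1 + - (C + 1)) with 0 by ring. rewrite exp_0. lra. }
  assert (HH : d * (C + 1) <= d * (ln r1 - ln d)) by (apply Rmult_le_compat_l; lra).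
  unfold C in HH. lra.
Qed.

Lemma G_sym q r : G q r = G r q.
Proof. unfold G. rewrite (Rplus_comm q r). ring. Qed.

Lemma ent_G (Q : Dist) t0 :
  condEntropy_T_XY Q =
  G (Q t0 false false) (Q (negb t0) false false) + G (Q t0 true true) (Q (negb t0) true true)
  + G (Q t0 false true) (Q (negb t0) false true) + G (Q t0 true false) (Q (negb t0) true false).
Proof.
  unfold condEntropy_T_XY, margXY, G, sum2.
  destruct t0; simpl; [rewrite !(Rplus_comm (Q true _ _) (Q false _ _))|]; ring.
Qed.

Definition pert (Q : Dist) (t0 x0 y0 : bool) (d : R) : Dist :=
  fun t x y => if Bool.eqb t t0 then
     (if Bool.eqb (Bool.eqb x x0) (Bool.eqb y y0) then Q t x y + d else Q t x y - d)
     else Q t x y.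

Lemma pert_t0 Q t0 x0 y0 d x y : pert Q t0 x0 y0 d t0 x y =
  if Bool.eqb (Bool.eqb x x0) (Bool.eqb y y0) then Q t0 x y + d else Q t0 x y - d.
Proof. unfold pert. rewrite Bool.eqb_reflx. reflexivity. Qed.

Lemma pert_nt0 Q t0 x0 y0 d x y : pert Q t0 x0 y0 d (negb t0) x y = Q (negb t0) x y.
Proof. unfold pert. destruct t0; reflexivity. Qed.

Lemma pert_Delta P Q t0 x0 y0 d : DeltaP P Q -> 0 < d ->
  d < Q t0 x0 (negb y0) -> d < Q t0 (negb x0) y0 -> DeltaP P (pert Q t0 x0 y0 d).
Proof.
  intros [[Hn Hs] [HX HY]] Hd H1 H2.
  split; [split|split].
  - intros t x y. unfold pert. specialize (Hn t x y).
    destruct t0, x0, y0, t, x, y; simpl in *; lra.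
  - rewrite <- Hs. unfold pert, sum2. destruct t0, x0, y0; simpl; lra.
  - intros x t. rewrite <- HX. unfold margXT, pert, sum2. destruct t0, x0, y0, t, x; simpl; ring.
  - intros y t. rewrite <- HY. unfold margYT, pert, sum2. destruct t0, x0, y0, t, y; simpl; ring.
Qed.

Lemma ent_contra P Q t0 x0 y0 : is_argmax_condEnt P Q ->
  Q t0 x0 y0 = 0 -> 0 < Q (negb t0) x0 y0 ->
  0 < Q t0 x0 (negb y0) -> 0 < Q t0 (negb x0) y0 -> False.
Proof.
  intros [HD Hmax] H0 Hr H3 H4.
  pose proof HD as [[Hn _] _].
  destruct (key (Q t0 x0 y0) (Q t0 (negb x0) (negb y0)) (Q t0 x0 (negb y0)) (Q t0 (negb x0) y0)
                (Q (negb t0) x0 y0) (Q (negb t0) (negb x0) (negb y0)) (Q (negb t0) x0 (negb y0)) (Q (negb t0) (negb x0) y0))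
    as [d [Hd [Hd3 [Hd4 Hlt]]]]; auto.
  pose proof (Hmax _ (pert_Delta P Q t0 x0 y0 d HD Hd Hd3 Hd4)) as Hle.
  rewrite !(ent_G _ t0) in Hle. rewrite !pert_t0, !pert_nt0 in Hle.
  destruct x0, y0; simpl in *; lra.
Qed.

Definition Lw (w Z : Dist) : R := sum2 (fun t => sum2 (fun x => sum2 (fun y => w t x y * Z t x y))).

Lemma aff_Lw (S : Dist -> Prop) w c W : aff_hull S W -> (forall Z, S Z -> Lw w Z = c) -> Lw w W = c.
Proof.
  intros [l [Hf [Hs HW]]] HS.
  assert (E : Lw w W = fold_right (fun p acc => fst p * Lw w (snd p) + acc) 0 l).
  { unfold Lw, sum2. cbv beta. rewrite !HW. clear HW Hs Hf. induction l as [|[lam Z] l IH]; simpl.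
    - ring.
    - simpl in IH. rewrite <- IH. ring. }
  rewrite E. transitivity (c * fold_right (fun p acc => fst p + acc) 0 l).
  2: rewrite Hs; ring.
  clear E Hs HW. induction l as [|[lam Z] l IH]; simpl.
  - ring.
  - inversion Hf; subst. rewrite HS by auto. rewrite IH by auto. ring.
Qed.

Lemma min2 (F : bool -> R -> Prop) :
  (forall b, exists e, 0 < e /\ F b e) ->
  (forall b e e', 0 < e' <= e -> F b e -> F b e') ->
  exists e, 0 < e /\ forall b, F b e.
Proof.
  intros H Hm. destruct (H false) as [e1 [He1 F1]]. destruct (H true) as [e2 [He2 F2]].
  exists (Rmin e1 e2). split. apply Rmin_glb_lt; auto.
  intros []; [apply Hm with e2 | apply Hm with e1]; auto.
  split; [apply Rmin_glb_lt; auto | apply Rmin_r].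
  split; [apply Rmin_glb_lt; auto | apply Rmin_l].
Qed.

Lemma eps_exists (f : Dist) : exists e, 0 < e /\ forall t x y, 0 < f t x y -> e <= f t x y.
Proof.
  apply min2 with (F := fun t e => forall x y, 0 < f t x y -> e <= f t x y).
  2: { intros b e e' [Ha Hb'] Hb x y Hh. specialize (Hb x y Hh). lra. }
  intros t. apply min2 with (F := fun x e => forall y, 0 < f t x y -> e <= f t x y).
  2: { intros b e e' [Ha Hb'] Hb y Hh. specialize (Hb y Hh). lra. }
  intros x. apply min2 with (F := fun y e => 0 < f t x y -> e <= f t x y).
  2: { intros b e e' [Ha Hb'] Hb Hh. specialize (Hb Hh). lra. }
  intros y. destruct (Rlt_dec 0 (f t x y)).
  - exists (f t x y). split; auto. lra.
  - exists 1. split. lra. intros; contradiction.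
Qed.

Definition ind (t0 x0 y0 : bool) : Dist := fun t x y => if Bool.eqb t t0 && Bool.eqb x x0 && Bool.eqb y y0 then 1 else 0.
Definition indX (x0 t0 : bool) : Dist := fun t x y => if Bool.eqb t t0 && Bool.eqb x x0 then 1 else 0.
Definition indY (y0 t0 : bool) : Dist := fun t x y => if Bool.eqb t t0 && Bool.eqb y y0 then 1 else 0.
Definition one : Dist := fun _ _ _ => 1.

Lemma Lw_ind t0 x0 y0 Z : Lw (ind t0 x0 y0) Z = Z t0 x0 y0.
Proof. unfold Lw, ind, sum2. destruct t0, x0, y0; simpl; ring. Qed.
Lemma Lw_indX x0 t0 Z : Lw (indX x0 t0) Z = margXT Z x0 t0.
Proof. unfold Lw, indX, margXT, sum2. destruct t0, x0; simpl; ring. Qed.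
Lemma Lw_indY y0 t0 Z : Lw (indY y0 t0) Z = margYT Z y0 t0.
Proof. unfold Lw, indY, margYT, sum2. destruct t0, y0; simpl; ring. Qed.
Lemma Lw_one Z : Lw one Z = sum2 (fun t => sum2 (fun x => sum2 (fun y => Z t x y))).
Proof. unfold Lw, one, sum2. ring. Qed.

Lemma interior P Q : DeltaP P Q ->
  (forall t x y, 0 < Q t x y \/ margXT Q x t = 0 \/ margYT Q y t = 0) ->
  rel_interior (DeltaP P) Q.
Proof.
  intros HD Hc. pose proof HD as [[Hn Hs] [HX HY]].
  split; auto.
  destruct (eps_exists Q) as [e [He Hep]].
  exists e. split; auto. intros W HW Hnear.
  assert (WX : forall x t, margXT W x t = margXT P x t).
  { intros x t. rewrite <- Lw_indX. apply (aff_Lw _ _ _ _ HW).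
    intros Z [_ [HZ _]]. rewrite Lw_indX. auto. }
  assert (WY : forall y t, margYT W y t = margYT P y t).
  { intros y t. rewrite <- Lw_indY. apply (aff_Lw _ _ _ _ HW).
    intros Z [_ [_ HZ]]. rewrite Lw_indY. auto. }
  split; [split|split]; auto.
  - intros t x y. destruct (Hc t x y) as [Hp|[H0|H0]].
    + specialize (Hep t x y Hp). specialize (Hnear t x y).
      apply Rabs_def2 in Hnear. lra.
    + right. symmetry. rewrite <- (Lw_ind t x y). apply (aff_Lw _ _ _ _ HW).
      intros Z [[HZn _] [HZ _]]. rewrite Lw_ind.
      specialize (HZ x t). rewrite <- HX, H0 in HZ. unfold margXT, sum2 in HZ.
      pose proof (HZn t x false). pose proof (HZn t x true). destruct y; lra.
    + right. symmetry. rewrite <- (Lw_ind t x y). apply (aff_Lw _ _ _ _ HW).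
      intros Z [[HZn _] [_ HZ]]. rewrite Lw_ind.
      specialize (HZ y t). rewrite <- HY, H0 in HZ. unfold margYT, sum2 in HZ.
      pose proof (HZn t false y). pose proof (HZn t true y). destruct x; lra.
  - rewrite <- Lw_one. apply (aff_Lw _ _ _ _ HW).
    intros Z [[_ HZ] _]. rewrite Lw_one. auto.
Qed.

Lemma gmin_alg A q00 q01 q10 q11 : 0 < A -> A = q00 + q01 + q10 + q11 ->
  0 <= q00 -> 0 <= q11 -> (q00 = 0 \/ q11 = 0) ->
  q00 / A - ((q00 + q01) / A) * ((q00 + q10) / A) =
  - Rmin (((q00 + q01) / A) * ((q00 + q10) / A)) ((1 - (q00 + q01) / A) * (1 - (q00 + q10) / A)).
Proof.
  intros HA EA H00 H11 Hz.
  assert (E : (1 - (q00 + q01) / A) * (1 - (q00 + q10) / A) - ((q00 + q01) / A) * ((q00 + q10) / A)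
              = q11 / A - q00 / A) by (subst A; field; lra).
  assert (0 <= q11 / A) by (unfold Rdiv; apply Rmult_le_pos; [lra| left; apply Rinv_0_lt_compat; lra]).
  assert (0 <= q00 / A) by (unfold Rdiv; apply Rmult_le_pos; [lra| left; apply Rinv_0_lt_compat; lra]).
  destruct Hz as [Hz|Hz].
  - subst q00. replace (0 / A) with 0 in * by (unfold Rdiv; ring).
    rewrite Rmin_left; lra.
  - subst q11. replace (0 / A) with 0 in * by (unfold Rdiv; ring).
    rewrite Rmin_right; lra.
Qed.

Lemma gmax_alg A q00 q01 q10 q11 : 0 < A -> A = q00 + q01 + q10 + q11 ->
  0 <= q01 -> 0 <= q10 -> (q01 = 0 \/ q10 = 0) ->
  q00 / A - ((q00 + q01) / A) * ((q00 + q10) / A) =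
  Rmin (((q00 + q01) / A) * (1 - (q00 + q10) / A)) ((1 - (q00 + q01) / A) * ((q00 + q10) / A)).
Proof.
  intros HA EA H01 H10 Hz.
  assert (E1 : ((q00 + q01) / A) * (1 - (q00 + q10) / A) - (q00 / A - ((q00 + q01) / A) * ((q00 + q10) / A))
              = q01 / A) by (subst A; field; lra).
  assert (E2 : (1 - (q00 + q01) / A) * ((q00 + q10) / A) - (q00 / A - ((q00 + q01) / A) * ((q00 + q10) / A))
              = q10 / A) by (subst A; field; lra).
  assert (0 <= q01 / A) by (unfold Rdiv; apply Rmult_le_pos; [lra| left; apply Rinv_0_lt_compat; lra]).
  assert (0 <= q10 / A) by (unfold Rdiv; apply Rmult_le_pos; [lra| left; apply Rinv_0_lt_compat; lra]).
  destruct Hz as [Hz|Hz].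
  - subst q01. replace (0 / A) with 0 in E1 by (unfold Rdiv; ring). rewrite Rmin_left; lra.
  - subst q10. replace (0 / A) with 0 in E2 by (unfold Rdiv; ring). rewrite Rmin_right; lra.
Qed.

Lemma margT_XT (Z : Dist) t : margT Z t = margXT Z false t + margXT Z true t.
Proof. unfold margT, margXT, sum2. ring. Qed.

Lemma g1_lemmas P Q : is_dist P -> 0 < par_a P -> DeltaP P Q ->
  ((Q false false false = 0 \/ Q false true true = 0) -> par_g1 P Q = g1_min P) /\
  ((Q false false true = 0 \/ Q false true false = 0) -> par_g1 P Q = g1_max P).
Proof.
  intros HP Ha [[Hn Hs] [HX HY]].
  unfold par_g1, g1_min, g1_max, par_b, par_d, par_a in *.
  rewrite margT_XT in *. rewrite <- !HX, <- HY in *.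
  unfold margXT, margYT, sum2 in *.
  split; intros Hz.
  - apply (gmin_alg _ _ _ _ (Q false true true)); auto; ring.
  - apply (gmax_alg _ _ _ _ (Q false true true)); auto; ring.
Qed.

Lemma g2_lemmas P Q : is_dist P -> 0 < par_a P < 1 -> DeltaP P Q ->
  ((Q true false false = 0 \/ Q true true true = 0) -> par_g2 P Q = g2_min P) /\
  ((Q true false true = 0 \/ Q true true false = 0) -> par_g2 P Q = g2_max P).
Proof.
  intros [_ HP] Ha [[Hn Hs] [HX HY]].
  assert (E : 1 - par_a P = margT P true).
  { unfold par_a, margT. rewrite <- HP. unfold sum2. ring. }
  unfold par_g2, g2_min, g2_max, par_c, par_e. rewrite E.
  assert (Hb : 0 < margT P true) by lra.
  rewrite margT_XT in *. rewrite <- !HX, <- HY in *.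
  unfold margXT, margYT, sum2 in *.
  split; intros Hz.
  - apply (gmin_alg _ _ _ _ (Q true true true)); auto; ring.
  - apply (gmax_alg _ _ _ _ (Q true true true)); auto; ring.
Qed.

Lemma zero_or_pos v : 0 <= v -> 0 < v \/ v = 0.
Proof. intros H. destruct (Rle_lt_or_eq_dec _ _ H); auto. Qed.

Lemma table_cases (Q : Dist) t : (forall x y, 0 <= Q t x y) ->
  (forall x y, 0 < Q t x y) \/
  ((Q t false false = 0 \/ Q t true true = 0) /\ 0 < Q t false true /\ 0 < Q t true false) \/
  ((Q t false true = 0 \/ Q t true false = 0) /\ 0 < Q t false false /\ 0 < Q t true true) \/
  ((Q t false false = 0 \/ Q t true true = 0) /\ (Q t false true = 0 \/ Q t true false = 0)).
Proof.
  intros Hn.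
  destruct (zero_or_pos _ (Hn false false)) as [a|a];
  destruct (zero_or_pos _ (Hn false true)) as [b|b];
  destruct (zero_or_pos _ (Hn true false)) as [c|c];
  destruct (zero_or_pos _ (Hn true true)) as [d|d];
  first [ left; intros [] []; assumption | right; tauto ].
Qed.

Lemma degen_cond (Q : Dist) t : (forall x y, 0 <= Q t x y) ->
  ((Q t false false = 0 \/ Q t true true = 0) /\ (Q t false true = 0 \/ Q t true false = 0)) ->
  forall x y, 0 < Q t x y \/ margXT Q x t = 0 \/ margYT Q y t = 0.
Proof.
  intros Hn Hd x y. destruct (zero_or_pos _ (Hn x y)) as [h|h]; [left; auto|right].
  pose proof (Hn false false); pose proof (Hn false true); pose proof (Hn true false); pose proof (Hn true true).
  unfold margXT, margYT, sum2.
  destruct Hd as [[a|a] [b|b]]; destruct x, y; first [left; lra | right; lra].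
Qed.

Lemma diag_only P Q t : is_argmax_condEnt P Q -> (forall t x y, 0 <= Q t x y) ->
  (Q t false false = 0 \/ Q t true true = 0) -> 0 < Q t false true -> 0 < Q t true false ->
  (Q (negb t) false false = 0 \/ Q (negb t) true true = 0).
Proof.
  intros HA Hn [Hz|Hz] H1 H2.
  - destruct (zero_or_pos _ (Hn (negb t) false false)) as [h|h]; auto.
    exfalso. apply (ent_contra P Q t false false); simpl; auto.
  - destruct (zero_or_pos _ (Hn (negb t) true true)) as [h|h]; auto.
    exfalso. apply (ent_contra P Q t true true); simpl; auto.
Qed.

Lemma anti_only P Q t : is_argmax_condEnt P Q -> (forall t x y, 0 <= Q t x y) ->
  (Q t false true = 0 \/ Q t true false = 0) -> 0 < Q t false false -> 0 < Q t true true ->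
  (Q (negb t) false true = 0 \/ Q (negb t) true false = 0).
Proof.
  intros HA Hn [Hz|Hz] H1 H2.
  - destruct (zero_or_pos _ (Hn (negb t) false true)) as [h|h]; auto.
    exfalso. apply (ent_contra P Q t false true); simpl; auto.
  - destruct (zero_or_pos _ (Hn (negb t) true false)) as [h|h]; auto.
    exfalso. apply (ent_contra P Q t true false); simpl; auto.
Qed.

Theorem mainTheorem18 (P Qt : Dist) :
  is_dist P ->
  0 < par_a P < 1 ->
  is_argmax_condEnt P Qt ->
  rel_boundary (DeltaP P) Qt ->
  (par_g1 P Qt = g1_min P /\ par_g2 P Qt = g2_min P) \/
  (par_g1 P Qt = g1_max P /\ par_g2 P Qt = g2_max P).
Proof.
  intros HP Ha HA [_ Hni].
  pose proof HA as [HD _]. pose proof HD as [[Hn _] _].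
  destruct (g1_lemmas P Qt HP ltac:(lra) HD) as [G1a G1b].
  destruct (g2_lemmas P Qt HP Ha HD) as [G2a G2b].
  assert (Hn0 : forall x y, 0 <= Qt false x y) by auto.
  assert (Hn1 : forall x y, 0 <= Qt true x y) by auto.
  destruct (table_cases Qt false Hn0) as [T0|[T0|[T0|T0]]].
  2-3: destruct T0 as [Z [Pa Pb]].
  2: { left. pose proof (diag_only P Qt false HA Hn Z Pa Pb). simpl in *. auto. }
  2: { right. pose proof (anti_only P Qt false HA Hn Z Pa Pb). simpl in *. auto. }
  all: destruct (table_cases Qt true Hn1) as [T1|[T1|[T1|T1]]].
  all: try (destruct T1 as [Z [Pa Pb]];
    first [ left; pose proof (diag_only P Qt true HA Hn Z Pa Pb); simpl in *; auto; fail
          | right; pose proof (anti_only P Qt true HA Hn Z Pa Pb); simpl in *; auto; fail ]).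
  all: exfalso; apply Hni; apply interior; auto;
       intros [] x y; first [ solve [left; auto] | solve [apply degen_cond; auto] ].
Qed.
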